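(* Let $0\to V\to\widehat A\xrightarrow{j}A\to0$ be an abelian extension of a Com-PreLie algebra $A$ by a representation $(V,\mu,l,r)$ inducing that representation, let $s$ be a linear section of $j$, and let $(\phi,\psi)$ be the 2-cocycle $\phi(x,y)=s(x)\ast_{\widehat A}s(y)-s(x\ast y)$, $\psi(x,y)=s(x)\bullet_{\widehat A}s(y)-s(x\bullet y)$. A pair $(\beta,\alpha)\in\mathrm{Aut}(V)\times\mathrm{Aut}(A)$ is inducible if and only if $(\beta,\alpha)\in\mathcal C$ and the 2-cocycles $(\phi,\psi)^{(\beta,\alpha)}$ and $(\phi,\psi)$ are cohomologous.
   Context: All vector spaces are over a field of characteristic $0$. A Com-PreLie algebra is a triple $(A,\ast,\bullet)$ where $A$ is a vector space, $\ast$ is a commutative associative bilinear product on $A$, and $\bullet$ is a bilinear product on $A$ satisfying the left pre-Lie identity $(x\bullet y)\bullet z-x\bullet(y\bullet z)=(y\bullet x)\bullet z-y\bullet(x\bullet z)$ and the compatibility $x\bullet(y\ast z)=(x\bullet y)\ast z+y\ast(x\bullet z)$ for all $x,y,z\in A$. A homomorphism of Com-PreLie algebras is a linear map preserving both products. A representation of $A$ is a quadruple $(V,\mu,l,r)$ with $V$ a vector space and $\mu,l,r:A\to\mathrm{End}(V)$ linear maps satisfying, for all $x,y\in A$: $\mu(x\ast y)=\mu(x)\mu(y)$; $l(x\bullet y)-l(x)l(y)=l(y\bullet x)-l(y)l(x)$; $r(y)l(x)-l(x)r(y)=r(y)r(x)-r(x\bullet y)$; $l(x)\mu(y)=\mu(x\bullet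 y)+\mu(y)l(x)$; $r(x\ast y)=\mu(y)r(x)+\mu(x)r(y)$. An abelian extension of $A$ by $V$ is a Com-PreLie algebra $(\widehat A,\ast_{\widehat A},\bullet_{\widehat A})$ with a short exact sequence $0\to V\xrightarrow{i}\widehat A\xrightarrow{j}A\to0$ of Com-PreLie algebra homomorphisms, $V$ carrying the zero products; $V$ is identified with $i(V)=\ker j$. It induces the given representation if for any linear section $s$ of $j$ ($j\circ s=\mathrm{id}_A$): $\mu(x)u=s(x)\ast_{\widehat A}u$, $l(x)u=s(x)\bullet_{\widehat A}u$, $r(x)u=u\bullet_{\widehat A}s(x)$. Two pairs $(\phi,\psi),(\phi',\psi')$ of bilinear maps $A\times A\to V$ are cohomologous if there is a linear $f:A\to V$ with $\phi(x,y)-\phi'(x,y)=\mu(x)f(y)-f(x\ast y)+\mu(y)f(x)$ and $\psi(x,y)-\psi'(x,y)=l(x)f(y)-f(x\bullet y)+r(y)f(x)$ for all $x,y\in A$. $\mathrm{Aut}(A)$ is the group of Com-PreLie algebra automorphisms of $A$; $\mathrm{Aut}(V)$ is the group of linear automorphisms of $V$; $\mathrm{Aut}_V(\widehat A)$ is the group of Com-PreLie algebra automorphisms $\gamma$ of $\widehat A$ with $\gamma(V)=V$. For $\gamma\in\mathrm{Aut}_V(\widehat A)$ put $\overline\gamma=j\gamma s\in\mathrm{Aut}(A)$ and $\tau(\gamma)=(\gamma|_V,\overline\gamma)$. A pair $(\beta,\alpha)\in\mathrm{Aut}(V)\times\mathrm{Aut}(A)$ is inducible if $(\beta,\alpha)=\tau(\gamma)$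 for some $\gamma\in\mathrm{Aut}_V(\widehat A)$. $\mathcal C$ is the set of pairs $(\beta,\alpha)\in\mathrm{Aut}(V)\times\mathrm{Aut}(A)$ with $\beta(\mu(x)u)=\mu(\alpha(x))\beta(u)$, $\beta(l(x)u)=l(\alpha(x))\beta(u)$, $\beta(r(x)u)=r(\alpha(x))\beta(u)$ for all $x\in A,u\in V$. For such a pair, $(\phi,\psi)^{(\beta,\alpha)}$ is the pair $(x,y)\mapsto\big(\beta\phi(\alpha^{-1}x,\alpha^{-1}y),\ \beta\psi(\alpha^{-1}x,\alpha^{-1}y)\big)$. *)

(* Defs.v *)
From HB Require Import structures.
From mathcomp Require Import all_boot all_order all_algebra.
Set Implicit Arguments. Unset Strict Implicit. Unset Printing Implicit Defensive.
Import GRing.Theory.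
Local Open Scope ring_scope.

Section ComPreLie.
Variable K : fieldType.

Definition islinear (U W : lmodType K) (f : U -> W) : Prop :=
  forall (a : K) (x y : U), f (a *: x + y) = a *: f x + f y.

Definition isbilinear (U W : lmodType K) (f : U -> U -> W) : Prop :=
  (forall x, islinear (f x)) /\ (forall y, islinear (fun x => f x y)).

(* (A, mul, pl) is a Com-PreLie algebra: mul = *, pl = bullet *)
Definition is_ComPreLie (A : lmodType K) (mul pl : A -> A -> A) : Prop :=
  isbilinear mul /\ isbilinear pl /\
  (forall x y, mul x y = mul y x) /\
  (forall x y z, mul (mul x y) z = mul x (mul y z)) /\
  (forall x y z, pl (pl x y) z - pl x (pl y z) = pl (pl y x) z - pl y (pl x z)) /\
  (forall x y z, pl x (mul y z) = mul (pl x y) z + mul y (pl x z)).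

Definition is_CPL_hom (A B : lmodType K) (mulA plA : A -> A -> A)
  (mulB plB : B -> B -> B) (f : A -> B) : Prop :=
  [/\ islinear f, (forall x y, f (mulA x y) = mulB (f x) (f y))
    & (forall x y, f (plA x y) = plB (f x) (f y))].

Definition is_CPL_aut (A : lmodType K) (mul pl : A -> A -> A) (f : A -> A) : Prop :=
  is_CPL_hom mul pl mul pl f /\ bijective f.

Definition is_lin_aut (V : lmodType K) (f : V -> V) : Prop :=
  islinear f /\ bijective f.

Definition is_representation (A V : lmodType K) (mul pl : A -> A -> A)
  (mu l r : A -> V -> V) : Prop :=
  (forall x, islinear (mu x)) /\ (forall x, islinear (l x)) /\ (forall x, islinear (r x)) /\
  (forall a x y u, mu (a *: x + y) u = a *: mu x u + mu y u) /\
  (forall a x y u, l (a *: x + y) u = a *: l x u + l y u) /\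
  (forall a x y u, r (a *: x + y) u = a *: r x u + r y u) /\
  (forall x y u, mu (mul x y) u = mu x (mu y u)) /\
  (forall x y u, l (pl x y) u - l x (l y u) = l (pl y x) u - l y (l x u)) /\
  (forall x y u, r y (l x u) - l x (r y u) = r y (r x u) - r (pl x y) u) /\
  (forall x y u, l x (mu y u) = mu (pl x y) u + mu y (l x u)) /\
  (forall x y u, r (mul x y) u = mu y (r x u) + mu x (r y u)).

Definition is_section (Ah A : lmodType K) (j : Ah -> A) (s : A -> Ah) : Prop :=
  islinear s /\ (forall x, j (s x) = x).

Definition is_abelian_extension (A V Ah : lmodType K) (mul pl : A -> A -> A)
  (mulh plh : Ah -> Ah -> Ah) (i : V -> Ah) (j : Ah -> A) : Prop :=
  is_ComPreLie mulh plh /\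
  is_CPL_hom (fun _ _ => 0) (fun _ _ => 0) mulh plh i /\
  is_CPL_hom mulh plh mul pl j /\
  injective i /\
  (forall x, exists a, j a = x) /\
  (forall a, j a = 0 <-> exists u, a = i u).

(* the extension induces the representation (mu, l, r), V identified with i(V) *)
Definition induces_rep (A V Ah : lmodType K) (mulh plh : Ah -> Ah -> Ah)
  (i : V -> Ah) (j : Ah -> A) (mu l r : A -> V -> V) : Prop :=
  forall s, is_section j s ->
    forall x u, [/\ i (mu x u) = mulh (s x) (i u),
                    i (l x u) = plh (s x) (i u)
                  & i (r x u) = plh (i u) (s x)].

Definition cohomologous (A V : lmodType K) (mul pl : A -> A -> A)
  (mu l r : A -> V -> V) (phi psi phi' psi' : A -> A -> V) : Prop :=
  exists f : A -> V, islinear f /\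
    forall x y,
      phi x y - phi' x y = mu x (f y) - f (mul x y) + mu y (f x) /\
      psi x y - psi' x y = l x (f y) - f (pl x y) + r y (f x).

Definition in_C (A V : lmodType K) (mu l r : A -> V -> V) (beta : V -> V)
  (alpha : A -> A) : Prop :=
  forall x u, [/\ beta (mu x u) = mu (alpha x) (beta u),
                  beta (l x u) = l (alpha x) (beta u)
                & beta (r x u) = r (alpha x) (beta u)].

(* (phi,psi)^(beta,alpha), given the inverse alphainv of alpha *)
Definition twist (A V : lmodType K) (beta : V -> V) (alphainv : A -> A)
  (phi : A -> A -> V) : A -> A -> V :=
  fun x y => beta (phi (alphainv x) (alphainv y)).

(* (beta, alpha) is inducible: equals tau(gamma) for some gamma in Aut_V(Ah);
   gamma|_V read through i, and alphabar = j gamma s *)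
Definition inducible (A V Ah : lmodType K) (mulh plh : Ah -> Ah -> Ah)
  (i : V -> Ah) (j : Ah -> A) (s : A -> Ah) (beta : V -> V) (alpha : A -> A) : Prop :=
  exists gamma : Ah -> Ah,
    [/\ is_CPL_aut mulh plh gamma,
        (forall a, (exists u, a = i u) <-> (exists u, gamma a = i u)),
        (forall u, gamma (i u) = i (beta u))
      & (forall x, j (gamma (s x)) = alpha x)].

End ComPreLie.

(* Main.v *)
Require Import Defs.
From HB Require Import structures.
From mathcomp Require Import all_boot all_order all_algebra.
Import GRing.Theory.
Local Open Scope ring_scope.

Lemma ac1 (M : zmodType) (G P Q F W U : M) :
  G + ((P - G + Q + F) + W + U) = F + (P + W) + (Q + U).
Proof.
rewrite -(addrA P) (addrC (-G)) -!addrA (addrCA G P) (addrCA G Q) addNKr.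
by rewrite (addrCA Q F) (addrCA P F) (addrCA Q W).
Qed.

Lemma ac2 (M : zmodType) (F P Q L : M) : (F + P + Q - L) - F = P - L + Q.
Proof. by rewrite -(addrA (F+P)) -(addrA F) [LHS]addrC addKr addrA addrAC. Qed.

Lemma lin0 {K : fieldType} {U W : lmodType K} {f : U -> W} : islinear f -> f 0 = 0.
Proof.
move=> h; have := h 1 0 0; rewrite !scale1r addr0 => E.
by apply: (@addrI _ (f 0)); rewrite addr0 -E.
Qed.

Lemma linD {K : fieldType} {U W : lmodType K} {f : U -> W} x y :
  islinear f -> f (x + y) = f x + f y.
Proof. by move=> h; have := h 1 x y; rewrite !scale1r. Qed.

Lemma linZ {K : fieldType} {U W : lmodType K} {f : U -> W} a x :
  islinear f -> f (a *: x) = a *: f x.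
Proof. by move=> h; have := h a x 0; rewrite addr0 (lin0 h) addr0. Qed.

Lemma linN {K : fieldType} {U W : lmodType K} {f : U -> W} x :
  islinear f -> f (- x) = - f x.
Proof. by move=> h; rewrite -scaleN1r (linZ _ _ h) scaleN1r. Qed.

Lemma linB {K : fieldType} {U W : lmodType K} {f : U -> W} x y :
  islinear f -> f (x - y) = f x - f y.
Proof. by move=> h; rewrite (linD _ _ h) (linN _ h). Qed.

Lemma lin_comp {K : fieldType} {U W X : lmodType K} {f : U -> W} {g : W -> X} :
  islinear f -> islinear g -> islinear (fun x => g (f x)).
Proof. by move=> hf hg a x y; rewrite hf hg. Qed.

Lemma lin_inv {K : fieldType} {U : lmodType K} {f finv : U -> U} :
  islinear f -> cancel f finv -> cancel finv f -> islinear finv.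
Proof. by move=> h c1 c2 a x y; rewrite -{1}(c2 x) -{1}(c2 y) -h c1. Qed.

Theorem theorem4p2 (K : fieldType) (charK0 : [pchar K] =i pred0)
  (A V Ah : lmodType K)
  (mul pl : A -> A -> A) (mulh plh : Ah -> Ah -> Ah)
  (mu l r : A -> V -> V) (i : V -> Ah) (j : Ah -> A) (s : A -> Ah)
  (phi psi : A -> A -> V)
  (hA : is_ComPreLie mul pl)
  (hrep : is_representation mul pl mu l r)
  (hext : is_abelian_extension mul pl mulh plh i j)
  (hind : induces_rep mulh plh i j mu l r)
  (hs : is_section j s)
  (hphi : forall x y, i (phi x y) = mulh (s x) (s y) - s (mul x y))
  (hpsi : forall x y, i (psi x y) = plh (s x) (s y) - s (pl x y))
  (beta : V -> V) (alpha alphainv : A -> A)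
  (hbeta : is_lin_aut beta) (halpha : is_CPL_aut mul pl alpha)
  (halinv1 : cancel alpha alphainv) (halinv2 : cancel alphainv alpha) :
  inducible mulh plh i j s beta alpha <->
  (in_C mu l r beta alpha /\
   cohomologous mul pl mu l r (twist beta alphainv phi) (twist beta alphainv psi) phi psi).
Proof.
have [slin sK] := hs.
case: hext => [[[mhl mhr] [[phl phr] [mhC _]]] [[ilin imul ipl] [[jlin jmul jpl] [iinj [_ hker]]]]].
case: hrep => [mulin [llin [rlin _]]].
case: halpha => [[alin amul apl] abij].
case: hbeta => [blin bbij].
have ainvlin : islinear alphainv := lin_inv alin halinv1 halinv2.
have mhDl : forall a b c, mulh (a + b) c = mulh a c + mulh b c := fun a b c => linD a b (mhr c).
have mhDr : forall a b c, mulh c (a + b) = mulh c a + mulh c b := fun a b c => linD a b (mhl c).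
have phDl : forall a b c, plh (a + b) c = plh a c + plh b c := fun a b c => linD a b (phr c).
have phDr : forall a b c, plh c (a + b) = plh c a + plh c b := fun a b c => linD a b (phl c).
have muD : forall x a b, mu x (a + b) = mu x a + mu x b := fun x a b => linD a b (mulin x).
have lD : forall x a b, l x (a + b) = l x a + l x b := fun x a b => linD a b (llin x).
have rD : forall x a b, r x (a + b) = r x a + r x b := fun x a b => linD a b (rlin x).
have mhii : forall u w, mulh (i u) (i w) = 0 by move=> u w; rewrite -imul /= (lin0 ilin).
have phii : forall u w, plh (i u) (i w) = 0 by move=> u w; rewrite -ipl /= (lin0 ilin).
have jiE : forall u, j (i u) = 0 by move=> u; apply/hker; exists u.
have siE : forall x u, j (s x + i u) = x by move=> x u; rewrite (linD _ _ jlin) sK jiE addr0.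
have Dec : forall a, exists x u, a = s x + i u.
  move=> a; have [u hu] : exists u, a - s (j a) = i u.
    by apply/hker; rewrite (linB _ _ jlin) sK subrr.
  by exists (j a), u; rewrite -hu addrC subrK.
have uniq : forall x u y w, s x + i u = s y + i w -> x = y /\ u = w.
  move=> x u y w E; have Exy : x = y by rewrite -(siE x u) E siE.
  by split=> //; apply: iinj; apply: (@addrI _ (s x)); rewrite E Exy.
have hmu : forall x u, mulh (s x) (i u) = i (mu x u) by move=> x u; case: (hind s hs x u).
have hl : forall x u, plh (s x) (i u) = i (l x u) by move=> x u; case: (hind s hs x u).
have hr : forall x u, plh (i u) (s x) = i (r x u) by move=> x u; case: (hind s hs x u).
have mulhE : forall x u y w, mulh (s x + i u) (s y + i w) =
    s (mul x y) + i (phi x y + mu x w + mu y u).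
  move=> x u y w; rewrite mhDl !mhDr hmu mhii [mulh (i u) _]mhC hmu addr0.
  have -> : mulh (s x) (s y) = s (mul x y) + i (phi x y) by rewrite hphi addrC subrK.
  by rewrite !(linD _ _ ilin) !addrA.
have plhE : forall x u y w, plh (s x + i u) (s y + i w) =
    s (pl x y) + i (psi x y + l x w + r y u).
  move=> x u y w; rewrite phDl !phDr hl phii hr addr0.
  have -> : plh (s x) (s y) = s (pl x y) + i (psi x y) by rewrite hpsi addrC subrK.
  by rewrite !(linD _ _ ilin) !addrA.
split.
- case=> gam [[[glin gmul gpl] gbij] gV gi gjs].
  have ex : forall x, exists u, gam (s x) == s (alpha x) + i u.
    move=> x; have [y [u E]] := Dec (gam (s x)).
    have Ey : y = alpha x by rewrite -(gjs x) E siE.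
    by exists u; rewrite E Ey.
  pose lam x := xchoose (ex x).
  have gs : forall x, gam (s x) = s (alpha x) + i (lam x).
    by move=> x; apply/eqP; exact: xchooseP (ex x).
  split.
  + move=> x u; split; apply: iinj.
    * by rewrite -gi -hmu gmul gs gi mhDl hmu mhii addr0.
    * by rewrite -gi -hl gpl gs gi phDl hl phii addr0.
    * by rewrite -gi -hr gpl gs gi phDr hr phii addr0.
  + have E : forall z, i (lam z) = gam (s z) - s (alpha z).
      by move=> z; rewrite gs addrC addKr.
    have lamlin : islinear lam.
      move=> c x y; apply: iinj.
      rewrite ilin !E slin glin alin slin.
      by rewrite scalerBr opprD addrACA.
    have key : forall a b, beta (phi a b) =
        phi (alpha a) (alpha b) + mu (alpha a) (lam b) + mu (alpha b) (lam a) - lam (mul a b).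
      move=> a b; apply: iinj.
      rewrite (linB _ _ ilin) -gi hphi (linB _ _ glin) gmul !gs mulhE amul.
      by rewrite opprD addrACA subrr add0r.
    have keyp : forall a b, beta (psi a b) =
        psi (alpha a) (alpha b) + l (alpha a) (lam b) + r (alpha b) (lam a) - lam (pl a b).
      move=> a b; apply: iinj.
      rewrite (linB _ _ ilin) -gi hpsi (linB _ _ glin) gpl !gs plhE apl.
      by rewrite opprD addrACA subrr add0r.
    exists (fun x => lam (alphainv x)); split; first exact: lin_comp ainvlin lamlin.
    move=> x y; rewrite /twist.
    have Hm : alphainv (mul x y) = mul (alphainv x) (alphainv y).
      by rewrite -{1}(halinv2 x) -{1}(halinv2 y) -amul halinv1.
    have Hp : alphainv (pl x y) = pl (alphainv x) (alphainv y).
      by rewrite -{1}(halinv2 x) -{1}(halinv2 y) -apl halinv1.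
    rewrite key keyp Hm Hp !halinv2; split; exact: ac2.
- case=> hC [f [flin fcoc]].
  have [binv bK Kb] := bbij.
  have Cmu : forall x u, beta (mu x u) = mu (alpha x) (beta u) by move=> x u; case: (hC x u).
  have Cl : forall x u, beta (l x u) = l (alpha x) (beta u) by move=> x u; case: (hC x u).
  have Cr : forall x u, beta (r x u) = r (alpha x) (beta u) by move=> x u; case: (hC x u).
  have dex : forall a, exists u, a == s (j a) + i u.
    move=> a; have [x [u E]] := Dec a; exists u.
    by apply/eqP; rewrite {2}E siE; exact: E.
  pose v a := xchoose (dex a).
  have vE : forall x u, v (s x + i u) = u.
    move=> x u.
    have H : s x + i u == s (j (s x + i u)) + i (v (s x + i u)) := xchooseP (dex (s x + i u)).
    move: H; move: (v (s x + i u)) => t; rewrite siE => /eqP E.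
    by case: (uniq _ _ _ _ E) => _ H; exact: esym H.
  pose gam a := s (alpha (j a)) + i (f (alpha (j a)) + beta (v a)).
  have gamE : forall x u, gam (s x + i u) = s (alpha x) + i (f (alpha x) + beta u).
    by move=> x u; rewrite /gam siE vE.
  pose del a := s (alphainv (j a)) + i (binv (v a - f (alpha (alphainv (j a))))).
  have delE : forall x u, del (s x + i u) =
      s (alphainv x) + i (binv (u - f (alpha (alphainv x)))).
    by move=> x u; rewrite /del siE vE.
  have hrel : forall x y, beta (phi x y) =
      mu (alpha x) (f (alpha y)) - f (alpha (mul x y)) + mu (alpha y) (f (alpha x))
      + phi (alpha x) (alpha y).
    move=> x y; have [E _] := fcoc (alpha x) (alpha y).
    by move: E; rewrite /twist !halinv1 -amul => <-; rewrite subrK.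
  have hrelp : forall x y, beta (psi x y) =
      l (alpha x) (f (alpha y)) - f (alpha (pl x y)) + r (alpha y) (f (alpha x))
      + psi (alpha x) (alpha y).
    move=> x y; have [_ E] := fcoc (alpha x) (alpha y).
    by move: E; rewrite /twist !halinv1 -apl => <-; rewrite subrK.
  have linE : forall c x u y w, c *: (s x + i u) + (s y + i w) = s (c *: x + y) + i (c *: u + w).
    by move=> c x u y w; rewrite slin ilin scalerDr addrACA.
  exists gam; split.
  + split; [split|].
    * move=> c a b; have [x [u ->]] := Dec a; have [y [w ->]] := Dec b.
      rewrite linE !gamE linE.
      by rewrite alin flin blin scalerDr addrACA.
    * move=> a b; have [x [u ->]] := Dec a; have [y [w ->]] := Dec b.
      rewrite mulhE !gamE mulhE amul; congr (_ + i _).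
      rewrite !(linD _ _ blin) !Cmu !muD hrel amul; exact: ac1.
    * move=> a b; have [x [u ->]] := Dec a; have [y [w ->]] := Dec b.
      rewrite plhE !gamE plhE apl; congr (_ + i _).
      rewrite !(linD _ _ blin) Cl Cr !lD !rD hrelp apl; exact: ac1.
    * exists del.
      - move=> a; have [x [u ->]] := Dec a.
        by rewrite gamE delE !halinv1 addrAC subrr add0r bK.
      - move=> a; have [x [u ->]] := Dec a.
        by rewrite delE gamE !halinv2 Kb (addrC (f x)) subrK.
  + move=> a; have [x [u ->]] := Dec a; rewrite gamE; split.
    * case=> w E.
      have : s x + i u = s 0 + i w by rewrite E (lin0 slin) add0r.
      move/uniq => [-> _]; exists (beta u).
      by rewrite (lin0 alin) (lin0 flin) (lin0 slin) !add0r.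
    * case=> w E.
      have : s (alpha x) + i (f (alpha x) + beta u) = s 0 + i w by rewrite E (lin0 slin) add0r.
      move/uniq => [Ex _].
      have x0 : x = 0 by rewrite -(halinv1 x) Ex (lin0 ainvlin).
      by exists u; rewrite x0 (lin0 slin) add0r.
  + move=> u; have := gamE 0 u.
    by rewrite (lin0 alin) (lin0 flin) !(lin0 slin) !add0r.
  + move=> x; have := gamE x 0.
    by rewrite (lin0 ilin) !addr0 => ->; rewrite siE.
Qed.
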